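(* Let $z$ lie in the upper half-plane and let $E_4,\Delta_{24}$ and $\rho_n$ ($n\in\mathbb{N}$) be as in the context. Then for every integer $n\geq 3$, $$\rho_n(z)=2E_4(z)\,\rho_{n-1}(z)-E_4(z)^2\,\rho_{n-2}(z)+2^8\Delta_{24}(z)\,\rho_{n-3}(z).$$
   Context: For $z$ with $\mathrm{Im}(z)>0$ put $q=e^{\pi\sqrt{-1}z}$ and define $\vartheta_2(z)=\sum_{m\in\mathbb{Z}}q^{(m+1/2)^2}$, $\vartheta_3(z)=\sum_{m\in\mathbb{Z}}q^{m^2}$, $\vartheta_4(z)=\sum_{m\in\mathbb{Z}}(-q)^{m^2}$. Define $E_4(z)=\frac12(\vartheta_2(z)^8+\vartheta_3(z)^8+\vartheta_4(z)^8)$, $\Delta_{24}(z)=\left(\frac{\vartheta_2(z)\vartheta_3(z)\vartheta_4(z)}{2}\right)^8$, and for a nonnegative integer $n$, $$\rho_n(z)=\frac{\vartheta_3(z)^{8(n+1)+4}-\vartheta_2(z)^{8(n+1)+4}-\vartheta_4(z)^{8(n+1)+4}}{(\vartheta_2(z)\vartheta_3(z)\vartheta_4(z))^4}.$$ *)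

(* Defs.v *)
From Stdlib Require Import Reals.
From Coquelicot Require Import Coquelicot.
Open Scope C_scope.

Notation CC := Complex.C.

Definition cexp (w : CC) : CC :=
  (exp (Re w) * cos (Im w), exp (Re w) * sin (Im w))%R.

(* q^t := e^{pi i z t} where q = e^{pi i z}, t real *)
Definition qpow (z : CC) (t : R) : CC := cexp (RtoC PI * Ci * z * RtoC t).

(* Sum over m in Z, as the limit of the symmetric partial sums
   sum_{m=-N}^{N} f m (real and imaginary parts taken as limits). *)
Definition partial_Z (f : Z -> CC) (N : nat) : CC :=
  sum_n (fun k : nat => f (Z.of_nat k - Z.of_nat N)%Z) (2 * N).
Definition sum_Z (f : Z -> CC) : CC :=
  (real (Lim_seq (fun N => Re (partial_Z f N))), real (Lim_seq (fun N => Im (partial_Z f N)))).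

Definition theta2 (z : CC) : CC := sum_Z (fun m => qpow z ((IZR m + /2) ^ 2)%R).
Definition theta3 (z : CC) : CC := sum_Z (fun m => qpow z (IZR m ^ 2)%R).
(* (-q)^{m^2} = (-1)^{m^2} q^{m^2} *)
Definition theta4 (z : CC) : CC :=
  sum_Z (fun m => pow_n (RtoC (-1)) (Z.to_nat (m * m)) * qpow z (IZR m ^ 2)%R).

Definition E4 (z : CC) : CC :=
  / 2 * (pow_n (theta2 z) 8 + pow_n (theta3 z) 8 + pow_n (theta4 z) 8).

Definition Delta24 (z : CC) : CC :=
  pow_n (theta2 z * theta3 z * theta4 z / 2) 8.

Definition rho (n : nat) (z : CC) : CC :=
  (pow_n (theta3 z) (8 * (n + 1) + 4) - pow_n (theta2 z) (8 * (n + 1) + 4)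
     - pow_n (theta4 z) (8 * (n + 1) + 4))
  / pow_n (theta2 z * theta3 z * theta4 z) 4.

(* Main.v *)
Require Import Defs.
From Stdlib Require Import Reals.
From Coquelicot Require Import Coquelicot.
Open Scope C_scope.
From Stdlib Require Import List Lia ZArith Permutation Lra.
Import ListNotations.

Fixpoint lsum {X} (f : X -> C) (l : list X) : C :=
  match l with nil => 0 | x :: l' => f x + lsum f l' end.
Fixpoint lsumR {X} (f : X -> R) (l : list X) : R :=
  match l with nil => 0%R | x :: l' => (f x + lsumR f l')%R end.

Lemma lsum_app {X} (f : X -> C) l1 l2 : lsum f (l1 ++ l2) = lsum f l1 + lsum f l2.
Proof. induction l1; simpl. ring. rewrite IHl1; ring. Qed.
Lemma lsumR_app {X} (f : X -> R) l1 l2 : lsumR f (l1 ++ l2) = (lsumR f l1 + lsumR f l2)%R.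
Proof. induction l1; simpl. ring. rewrite IHl1; ring. Qed.
Lemma lsum_map {X Y} (f : Y -> C) (e : X -> Y) l : lsum f (map e l) = lsum (fun x => f (e x)) l.
Proof. induction l; simpl; congruence. Qed.
Lemma lsumR_map {X Y} (f : Y -> R) (e : X -> Y) l : lsumR f (map e l) = lsumR (fun x => f (e x)) l.
Proof. induction l; simpl; congruence. Qed.
Lemma lsum_ext {X} (f g : X -> C) l : (forall x, f x = g x) -> lsum f l = lsum g l.
Proof. intros H; induction l; simpl; congruence. Qed.
Lemma lsumR_ext {X} (f g : X -> R) l : (forall x, In x l -> f x = g x) -> lsumR f l = lsumR g l.
Proof. intros H; induction l; simpl in *; auto. rewrite H, IHl; auto. Qed.
Lemma lsum_scal {X} (c : C) (f : X -> C) l : lsum (fun x => c * f x) l = c * lsum f l.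
Proof. induction l; simpl. ring. rewrite IHl; ring. Qed.
Lemma lsumR_scal {X} (c : R) (f : X -> R) l : lsumR (fun x => c * f x)%R l = (c * lsumR f l)%R.
Proof. induction l; simpl. ring. rewrite IHl; ring. Qed.
Lemma lsum_plus {X} (f g : X -> C) l : lsum (fun x => f x + g x) l = lsum f l + lsum g l.
Proof. induction l; simpl. ring. rewrite IHl; ring. Qed.
Lemma lsum_perm {X} (f : X -> C) l m : Permutation l m -> lsum f l = lsum f m.
Proof. induction 1; simpl; try congruence. ring. Qed.
Lemma lsumR_perm {X} (f : X -> R) l m : Permutation l m -> lsumR f l = lsumR f m.
Proof. induction 1; simpl; try congruence. ring. Qed.
Lemma lsum_filter {X} (f : X -> C) (P : X -> bool) l :
  lsum f l = lsum f (filter P l) + lsum f (filter (fun x => negb (P x)) l).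
Proof. induction l; simpl. ring. destruct (P a); simpl; rewrite IHl; ring. Qed.
Lemma lsumR_filter {X} (f : X -> R) (P : X -> bool) l :
  lsumR f l = (lsumR f (filter P l) + lsumR f (filter (fun x => negb (P x)) l))%R.
Proof. induction l; simpl. ring. destruct (P a); simpl; rewrite IHl; ring. Qed.
Lemma lsum_Cmod {X} (f : X -> C) l : Cmod (lsum f l) <= lsumR (fun x => Cmod (f x)) l.
Proof. induction l; simpl. rewrite Cmod_0; lra.
  eapply Rle_trans. apply Cmod_triangle. lra. Qed.
Lemma lsumR_nonneg {X} (f : X -> R) l : (forall x, 0 <= f x) -> 0 <= lsumR f l.
Proof. intros H; induction l; simpl. lra. specialize (H a); lra. Qed.
Lemma lsumR_le {X} (f g : X -> R) l : (forall x, In x l -> f x <= g x) -> lsumR f l <= lsumR g l.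
Proof. intros H; induction l; simpl in *. lra. pose proof (H a (or_introl eq_refl)).
  assert (lsumR f l <= lsumR g l) by auto. lra. Qed.

Section Dec.
Context {X : Type} (dec : forall x y : X, {x = y} + {x <> y}).

Lemma lsumR_remove_le (w : X -> R) x M : (forall x, 0 <= w x) -> lsumR w (remove dec x M) <= lsumR w M.
Proof. intros Hw; induction M; simpl. lra. destruct (dec x a); simpl.
  specialize (Hw a); lra. lra. Qed.
Lemma lsumR_remove (w : X -> R) x M : (forall x, 0 <= w x) -> In x M ->
  (w x + lsumR w (remove dec x M) <= lsumR w M)%R.
Proof. intros Hw; induction M; simpl; intros H. contradiction.
  destruct (dec x a); simpl.
  - subst. pose proof (lsumR_remove_le w a M Hw). lra.
  - destruct H. congruence. specialize (IHM H). lra. Qed.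
Lemma lsumR_sub (w : X -> R) L M : (forall x, 0 <= w x) -> NoDup L -> incl L M -> lsumR w L <= lsumR w M.
Proof. intros Hw HL; revert M; induction HL as [|x L Hx HL IH]; intros M Hi; simpl.
  apply lsumR_nonneg; auto.
  assert (In x M) by (apply Hi; left; auto).
  pose proof (lsumR_remove w x M Hw H).
  assert (lsumR w L <= lsumR w (remove dec x M)).
  { apply IH. intros y Hy. apply in_in_remove. intro; subst; auto. apply Hi; right; auto. }
  lra. Qed.

Definition inb (L : list X) (x : X) : bool := if in_dec dec x L then true else false.

Lemma lsum_split (f : X -> C) L0 L : NoDup L0 -> NoDup L -> incl L0 L ->
  lsum f L = lsum f L0 + lsum f (filter (fun x => negb (inb L0 x)) L).
Proof. intros H0 H1 Hi. rewrite (lsum_filter f (inb L0) L). f_equal.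
  apply lsum_perm. apply NoDup_Permutation. apply NoDup_filter; auto. auto.
  intros x; rewrite filter_In; unfold inb; destruct (in_dec dec x L0); split; intros; intuition; discriminate. Qed.

Lemma filter_notin_disj L0 L x : In x (filter (fun x => negb (inb L0 x)) L) -> ~ In x L0.
Proof. rewrite filter_In; unfold inb; destruct (in_dec dec x L0); simpl; intuition. Qed.

End Dec.


Definition HasSum {X} (f : X -> C) (S : C) := forall eps : R, (0 < eps)%R ->
  exists L0, NoDup L0 /\ forall L, NoDup L -> incl L0 L -> (Cmod (lsum f L - S) < eps)%R.
Definition AbsSmall {X} (f : X -> C) := forall eps : R, (0 < eps)%R ->
  exists L0, NoDup L0 /\ forall L, NoDup L -> (forall x, In x L -> ~ In x L0) ->
     (lsumR (fun x => Cmod (f x)) L <= eps)%R.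
Definition AbsBound {X} (f : X -> C) (B : R) := forall L, NoDup L ->
     (lsumR (fun x => Cmod (f x)) L <= B)%R.

Lemma Cmod_tri_minus (a b : C) : (Cmod (a - b) <= Cmod a + Cmod b)%R.
Proof. unfold Cminus. rewrite <- (Cmod_opp b). apply Cmod_triangle. Qed.

Lemma Cmod_small (x : C) : (forall eps, 0 < eps -> Cmod x < eps)%R -> x = 0.
Proof. intros H. apply Cmod_eq_0. pose proof (Cmod_ge_0 x).
  destruct (Rle_lt_or_eq_dec _ _ H0); auto. specialize (H _ r). lra. Qed.

Lemma HasSum_unique {X} (dec : forall x y : X, {x = y} + {x <> y}) (f : X -> C) (S T : C) :
  HasSum f S -> HasSum f T -> S = T.
Proof. intros HS HT. assert (S - T = 0).
  { apply Cmod_small. intros eps He.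
    destruct (HS (eps/2)%R) as [L1 [N1 H1]]. lra.
    destruct (HT (eps/2)%R) as [L2 [N2 H2]]. lra.
    set (L := nodup dec (L1 ++ L2)).
    assert (NoDup L) by apply NoDup_nodup.
    assert (incl L1 L). { intros x Hx. apply nodup_In. apply in_or_app; auto. }
    assert (incl L2 L). { intros x Hx. apply nodup_In. apply in_or_app; auto. }
    specialize (H1 L H H0). specialize (H2 L H H3).
    replace (S - T) with ((lsum f L - T) - (lsum f L - S)) by ring.
    eapply Rle_lt_trans. apply Cmod_tri_minus. lra. }
  replace S with ((S - T) + T) by ring. rewrite H. ring. Qed.

Lemma HasSum_ext {X} (f g : X -> C) S : (forall x, f x = g x) -> HasSum f S -> HasSum g S.
Proof. intros E H eps He. destruct (H eps He) as [L0 [N0 H0]]. exists L0; split; auto.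
  intros L NL IL. rewrite <- (lsum_ext f g L E). auto. Qed.

Lemma HasSum_scal {X} (f : X -> C) c S : HasSum f S -> HasSum (fun x => c * f x) (c * S).
Proof. intros H eps He.
  destruct (H (eps / (Cmod c + 1))%R) as [L0 [N0 H0]].
  { apply Rdiv_lt_0_compat; auto. pose proof (Cmod_ge_0 c); lra. }
  exists L0; split; auto. intros L NL IL. rewrite lsum_scal.
  replace (c * lsum f L - c * S) with (c * (lsum f L - S)) by ring.
  rewrite Cmod_mult. specialize (H0 L NL IL).
  pose proof (Cmod_ge_0 c). pose proof (Cmod_ge_0 (lsum f L - S)).
  apply Rle_lt_trans with (Cmod c * (eps / (Cmod c + 1)))%R.
  apply Rmult_le_compat_l; lra.
  assert (E : (Cmod c * (eps / (Cmod c + 1)) = eps - eps / (Cmod c + 1))%R) by (field; lra).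
  rewrite E. assert (0 < eps / (Cmod c + 1))%R by (apply Rdiv_lt_0_compat; lra). lra. Qed.

Lemma HasSum_bij {X Y} (e : Y -> X) (e' : X -> Y) (f : X -> C) S :
  (forall x, e (e' x) = x) -> (forall y, e' (e y) = y) ->
  HasSum f S -> HasSum (fun y => f (e y)) S.
Proof. intros H1 H2 H eps He. destruct (H eps He) as [L0 [N0 H0]].
  exists (map e' L0). split.
  - apply FinFun.Injective_map_NoDup; auto. intros a b E. rewrite <- (H1 a), <- (H1 b), E; auto.
  - intros L NL IL. rewrite <- lsum_map. apply H0.
    apply FinFun.Injective_map_NoDup; auto. intros a b E. rewrite <- (H2 a), <- (H2 b), E; auto.
    intros x Hx. rewrite <- (H1 x). apply in_map. apply IL. apply in_map; auto. Qed.

Definition lefts {X Y} (l : list (X + Y)) : list X :=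
  flat_map (fun s => match s with inl a => [a] | inr _ => [] end) l.
Definition rights {X Y} (l : list (X + Y)) : list Y :=
  flat_map (fun s => match s with inl _ => [] | inr b => [b] end) l.
Lemma in_lefts {X Y} (l : list (X+Y)) a : In a (lefts l) <-> In (inl a) l.
Proof. induction l as [|[b|b] l IH]; simpl. tauto.
  split; (intros [H|H]; [left; congruence | right; apply IH; auto]).
  split. intro H; right; apply IH; auto. intros [H|H]; [discriminate | apply IH; auto]. Qed.
Lemma in_rights {X Y} (l : list (X+Y)) a : In a (rights l) <-> In (inr a) l.
Proof. induction l as [|[b|b] l IH]; simpl. tauto.
  split. intro H; right; apply IH; auto. intros [H|H]; [discriminate | apply IH; auto].
  split; (intros [H|H]; [left; congruence | right; apply IH; auto]). Qed.
Lemma nodup_lefts {X Y} (l : list (X+Y)) : NoDup l -> NoDup (lefts l).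
Proof. induction 1 as [|[b|b] l Hx HL IH]; simpl; auto. constructor. constructor; auto.
  rewrite in_lefts; auto. Qed.
Lemma nodup_rights {X Y} (l : list (X+Y)) : NoDup l -> NoDup (rights l).
Proof. induction 1 as [|[b|b] l Hx HL IH]; simpl; auto. constructor. constructor; auto.
  rewrite in_rights; auto. Qed.
Lemma lsum_lr {X Y} (h : X + Y -> C) l : lsum h l = lsum (fun a => h (inl a)) (lefts l) + lsum (fun b => h (inr b)) (rights l).
Proof. induction l as [|[b|b] l IH]; simpl. ring. rewrite IH; ring. rewrite IH; ring. Qed.

Lemma HasSum_sum {X Y} (h : X + Y -> C) S T :
  HasSum (fun a => h (inl a)) S -> HasSum (fun b => h (inr b)) T -> HasSum h (S + T).
Proof. intros HS HT eps He.
  destruct (HS (eps/2)%R) as [L1 [N1 H1]]. lra.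
  destruct (HT (eps/2)%R) as [L2 [N2 H2]]. lra.
  exists (map inl L1 ++ map inr L2). split.
  - apply NoDup_app. apply FinFun.Injective_map_NoDup; auto. intros a b E; congruence.
    apply FinFun.Injective_map_NoDup; auto. intros a b E; congruence.
    intros x Hx Hy. apply in_map_iff in Hx, Hy. destruct Hx as [? [<- _]]. destruct Hy as [? [E _]]. discriminate.
  - intros L NL IL. rewrite lsum_lr.
    assert (A1 : Cmod (lsum (fun a => h (inl a)) (lefts L) - S) < eps/2).
    { apply H1. apply nodup_lefts; auto. intros a Ha. apply in_lefts. apply IL. apply in_or_app; left; apply in_map; auto. }
    assert (A2 : Cmod (lsum (fun a => h (inr a)) (rights L) - T) < eps/2).
    { apply H2. apply nodup_rights; auto. intros a Ha. apply in_rights. apply IL. apply in_or_app; right; apply in_map; auto. }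
    match goal with |- (Cmod (?a + ?b - _) < _)%R =>
     replace (a + b - (S + T)) with ((a - S) + (b - T)) by ring end.
    eapply Rle_lt_trans. apply Cmod_triangle. lra. Qed.


Lemma lsumR_plus {X} (f g : X -> R) l : lsumR (fun x => f x + g x)%R l = (lsumR f l + lsumR g l)%R.
Proof. induction l; simpl. ring. rewrite IHl; ring. Qed.

Lemma list_prod_cons {X Y} (x : X) l (l' : list Y) : list_prod (x :: l) l' = map (pair x) l' ++ list_prod l l'.
Proof. reflexivity. Qed.

Lemma NoDup_list_prod {X Y} (l : list X) (l' : list Y) : NoDup l -> NoDup l' -> NoDup (list_prod l l').
Proof. intros H H'. induction H; [simpl; constructor|]. rewrite list_prod_cons. apply NoDup_app.
  apply FinFun.Injective_map_NoDup; auto. intros a b E; congruence. auto.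
  intros p Hp Hq. apply in_map_iff in Hp. destruct Hp as [y [<- _]]. apply in_prod_iff in Hq. tauto. Qed.

Lemma lsumR_list_prod {X Y} (a : X -> R) (b : Y -> R) l l' :
  lsumR (fun p => a (fst p) * b (snd p))%R (list_prod l l') = (lsumR a l * lsumR b l')%R.
Proof. induction l; [simpl; ring|]. rewrite list_prod_cons, lsumR_app, IHl, lsumR_map. simpl.
  rewrite lsumR_scal. ring. Qed.
Lemma lsum_list_prod {X Y} (a : X -> C) (b : Y -> C) l l' :
  lsum (fun p => a (fst p) * b (snd p)) (list_prod l l') = lsum a l * lsum b l'.
Proof. induction l; [simpl; ring|]. rewrite list_prod_cons, lsum_app, IHl, lsum_map. simpl.
  rewrite lsum_scal. ring. Qed.

Section Prod.
Context {X Y : Type} (dx : forall x y : X, {x = y} + {x <> y}) (dy : forall x y : Y, {x = y} + {x <> y}).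
Definition dxy : forall p q : X * Y, {p = q} + {p <> q}.
Proof. intros [a b] [c d]. destruct (dx a c); destruct (dy b d); subst; auto; right; congruence. Defined.

Lemma prod_bound (a : X -> R) (b : Y -> R) L : (forall x, 0 <= a x)%R -> (forall y, 0 <= b y)%R -> NoDup L ->
  (lsumR (fun p => a (fst p) * b (snd p))%R L <= lsumR a (nodup dx (map fst L)) * lsumR b (nodup dy (map snd L)))%R.
Proof. intros Ha Hb HL. rewrite <- lsumR_list_prod. apply lsumR_sub. exact dxy.
  intros [x y]; simpl; apply Rmult_le_pos; auto. auto.
  intros [x y] Hp. apply in_prod_iff. split; apply nodup_In.
  change x with (fst (x,y)); apply in_map; auto. change y with (snd (x,y)); apply in_map; auto. Qed.

Lemma HasSum_prod (f : X -> C) (g : Y -> C) S T Bf Bg :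
  HasSum f S -> HasSum g T -> AbsSmall f -> AbsSmall g -> AbsBound f Bf -> AbsBound g Bg ->
  HasSum (fun p => f (fst p) * g (snd p)) (S * T).
Proof. intros HS HT AS AT BF BG eps He.
  assert (Bf0 : (0 <= Bf)%R) by (apply (BF nil); constructor).
  assert (Bg0 : (0 <= Bg)%R) by (apply (BG nil); constructor).
  set (M := (Cmod T + 1 + Cmod S + Bg + Bf + 1)%R).
  assert (HM : (0 < M)%R) by (unfold M; pose proof (Cmod_ge_0 T); pose proof (Cmod_ge_0 S); lra).
  set (d := Rmin 1 (eps / (2 * M))).
  assert (d0 : (0 < d)%R). { unfold d. apply Rmin_glb_lt. lra. apply Rdiv_lt_0_compat; lra. }
  assert (d1 : (d <= 1)%R) by apply Rmin_l.
  assert (dM : (d * M <= eps / 2)%R).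
  { unfold d. apply Rle_trans with (eps / (2*M) * M)%R. apply Rmult_le_compat_r. lra. apply Rmin_r.
    right; field; lra. }
  destruct (HS d d0) as [Af [NAf HAf]]. destruct (AS d d0) as [Af' [NAf' HAf']].
  destruct (HT d d0) as [Ag [NAg HAg]]. destruct (AT d d0) as [Ag' [NAg' HAg']].
  set (A := nodup dx (Af ++ Af')). set (B := nodup dy (Ag ++ Ag')).
  assert (NA : NoDup A) by apply NoDup_nodup. assert (NB : NoDup B) by apply NoDup_nodup.
  exists (list_prod A B). split. apply NoDup_list_prod; auto.
  intros L NL IL.
  rewrite (lsum_split dxy _ _ _ (NoDup_list_prod _ _ NA NB) NL IL).
  rewrite lsum_list_prod.
  set (L' := filter _ L).
  assert (NL' : NoDup L') by (apply NoDup_filter; auto).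
  assert (DL' : forall p, In p L' -> ~ In p (list_prod A B)) by (apply filter_notin_disj).
  assert (E1 : (Cmod (lsum f A - S) < d)%R).
  { apply HAf; auto. intros x Hx; apply nodup_In, in_or_app; auto. }
  assert (E2 : (Cmod (lsum g B - T) < d)%R).
  { apply HAg; auto. intros x Hx; apply nodup_In, in_or_app; auto. }
  set (a' := fun m => if inb dx A m then 0%R else Cmod (f m)).
  set (b' := fun m => if inb dy B m then 0%R else Cmod (g m)).
  assert (a'0 : forall m, (0 <= a' m)%R). { intros m; unfold a'; destruct inb. lra. apply Cmod_ge_0. }
  assert (b'0 : forall m, (0 <= b' m)%R). { intros m; unfold b'; destruct inb. lra. apply Cmod_ge_0. }
  assert (E3 : (Cmod (lsum (fun p => (f (fst p) * g (snd p))%C) L') <=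
               lsumR (fun p => a' (fst p) * Cmod (g (snd p)) + Cmod (f (fst p)) * b' (snd p))%R L')%R).
  { eapply Rle_trans. apply lsum_Cmod. apply lsumR_le. intros [x y] Hp. simpl.
    rewrite Cmod_mult. specialize (DL' _ Hp). rewrite in_prod_iff in DL'.
    pose proof (Cmod_ge_0 (f x)). pose proof (Cmod_ge_0 (g y)).
    unfold a', b', inb. destruct (in_dec dx x A); destruct (in_dec dy y B); try tauto; nra. }
  rewrite lsumR_plus in E3.
  assert (SA : forall P, NoDup P -> (lsumR a' P <= d)%R).
  { intros P NP. rewrite (lsumR_filter a' (inb dx A)).
    rewrite (lsumR_ext a' (fun _ => 0%R)). 2:{ intros x Hx. apply filter_In in Hx. unfold a'. destruct Hx as [_ ->]; auto. }
    rewrite (lsumR_ext a' (fun x => Cmod (f x)) (filter _ _)).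
    2:{ intros x Hx. apply filter_In in Hx. unfold a'. destruct Hx as [_ Hx]. destruct (inb dx A x); auto; discriminate. }
    assert (forall l : list X, lsumR (fun _ => 0%R) l = 0%R) as Z0 by (induction l; simpl; lra).
    rewrite Z0, Rplus_0_l. apply HAf'. apply NoDup_filter; auto.
    intros x Hx Hx'. apply filter_notin_disj in Hx. apply Hx, nodup_In, in_or_app; auto. }
  assert (SB : forall P, NoDup P -> (lsumR b' P <= d)%R).
  { intros P NP. rewrite (lsumR_filter b' (inb dy B)).
    rewrite (lsumR_ext b' (fun _ => 0%R)). 2:{ intros x Hx. apply filter_In in Hx. unfold b'. destruct Hx as [_ ->]; auto. }
    rewrite (lsumR_ext b' (fun x => Cmod (g x)) (filter _ _)).
    2:{ intros x Hx. apply filter_In in Hx. unfold b'. destruct Hx as [_ Hx]. destruct (inb dy B x); auto; discriminate. }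
    assert (forall l : list Y, lsumR (fun _ => 0%R) l = 0%R) as Z0 by (induction l; simpl; lra).
    rewrite Z0, Rplus_0_l. apply HAg'. apply NoDup_filter; auto.
    intros x Hx Hx'. apply filter_notin_disj in Hx. apply Hx, nodup_In, in_or_app; auto. }
  pose proof (prod_bound a' (fun y => Cmod (g y)) L' a'0 (fun y => Cmod_ge_0 _) NL') as P1.
  pose proof (prod_bound (fun x => Cmod (f x)) b' L' (fun y => Cmod_ge_0 _) b'0 NL') as P2.
  pose proof (SA _ (NoDup_nodup dx (map fst L'))).
  pose proof (SB _ (NoDup_nodup dy (map snd L'))).
  pose proof (BF _ (NoDup_nodup dx (map fst L'))).
  pose proof (BG _ (NoDup_nodup dy (map snd L'))).
  pose proof (lsumR_nonneg a' (nodup dx (map fst L')) a'0).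
  pose proof (lsumR_nonneg b' (nodup dy (map snd L')) b'0).
  set (R1 := lsumR a' (nodup dx (map fst L'))) in *.
  set (R2 := lsumR b' (nodup dy (map snd L'))) in *.
  set (R3 := lsumR (fun x => Cmod (f x)) (nodup dx (map fst L'))) in *.
  set (R4 := lsumR (fun x => Cmod (g x)) (nodup dy (map snd L'))) in *.
  assert (Etail : (Cmod (lsum (fun p => (f (fst p) * g (snd p))%C) L') <= d * Bg + Bf * d)%R).
  { eapply Rle_trans. apply E3. apply Rplus_le_compat.
    eapply Rle_trans. apply P1. apply Rmult_le_compat; auto. apply lsumR_nonneg; intros; apply Cmod_ge_0.
    eapply Rle_trans. apply P2. apply Rmult_le_compat; auto. apply lsumR_nonneg; intros; apply Cmod_ge_0. }
  set (U := lsum f A) in *. set (V := lsum g B) in *.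
  set (W := lsum (fun p => f (fst p) * g (snd p)) L') in *.
  replace (U * V + W - S * T) with ((U - S) * V + (S * (V - T) + W)) by ring.
  eapply Rle_lt_trans. apply Cmod_triangle.
  eapply Rle_lt_trans. apply Rplus_le_compat_l. apply Cmod_triangle.
  rewrite !Cmod_mult.
  assert (CV : (Cmod V <= Cmod T + d)%R).
  { replace V with ((V - T) + T) by ring. eapply Rle_trans. apply Cmod_triangle. lra. }
  pose proof (Cmod_ge_0 (U - S)). pose proof (Cmod_ge_0 V). pose proof (Cmod_ge_0 S). pose proof (Cmod_ge_0 (V - T)).
  pose proof (Cmod_ge_0 T).
  assert (Cmod (U - S) * Cmod V <= d * (Cmod T + 1))%R by (apply Rmult_le_compat; lra).
  assert (Cmod S * Cmod (V - T) <= Cmod S * d)%R by (apply Rmult_le_compat_l; lra).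
  unfold M in dM. nra. Qed.
End Prod.


Lemma seq_geom (rho : R) a n : (0 <= rho < 1)%R -> (lsumR (pow rho) (seq a n) <= rho ^ a / (1 - rho))%R.
Proof. intros Hr. revert a; induction n; intros a; simpl.
  - apply Rdiv_le_0_compat. apply pow_le; lra. lra.
  - specialize (IHn (S a)). simpl in IHn.
    assert (rho ^ a + rho * rho ^ a / (1 - rho) = rho ^ a / (1 - rho))%R by (field; lra). lra. Qed.

Lemma nat_tail (rho : R) L a : (0 <= rho < 1)%R -> NoDup L -> (forall k, In k L -> (a <= k)%nat) ->
  (lsumR (pow rho) L <= rho ^ a / (1 - rho))%R.
Proof. intros Hr NL HL. eapply Rle_trans. apply (lsumR_sub Nat.eq_dec _ L (seq a (S (list_max L)))).
  intros; apply pow_le; lra. auto.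
  intros k Hk. apply in_seq. split. auto.
  assert (k <= list_max L)%nat. { assert (list_max L <= list_max L)%nat by lia.
    apply list_max_le in H. rewrite Forall_forall in H. auto. } lia.
  apply seq_geom; auto. Qed.

Lemma NoDup_map_in {X Y} (f : X -> Y) L : NoDup L -> (forall x y, In x L -> In y L -> f x = f y -> x = y) -> NoDup (map f L).
Proof. induction 1 as [|x L Hx HL IH]; intros Hi; simpl; constructor.
  intros Hm. apply in_map_iff in Hm. destruct Hm as [y [E Hy]].
  assert (y = x) by (apply Hi; simpl; auto). subst; auto.
  apply IH. intros; apply Hi; simpl; auto. Qed.

Lemma Z_tail (rho : R) L a : (0 <= rho < 1)%R -> NoDup L -> (forall m, In m L -> (a <= Z.abs_nat m)%nat) ->
  (lsumR (fun m => rho ^ (Z.abs_nat m)) L <= 2 * (rho ^ a / (1 - rho)))%R.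
Proof. intros Hr NL HL. rewrite (lsumR_filter _ (Z.leb 0)).
  rewrite <- !(lsumR_map (pow rho) Z.abs_nat).
  assert (forall P : Z -> bool, (forall x, P x = true -> (0 <= x)%Z) \/ (forall x, P x = true -> (x < 0)%Z) ->
     (lsumR (pow rho) (map Z.abs_nat (filter P L)) <= rho ^ a / (1 - rho))%R) as G.
  { intros P HP. apply nat_tail; auto. apply NoDup_map_in. apply NoDup_filter; auto.
    intros x y Hx Hy E. apply filter_In in Hx, Hy. destruct HP as [HP|HP].
    - pose proof (HP x (proj2 Hx)); pose proof (HP y (proj2 Hy)). lia.
    - pose proof (HP x (proj2 Hx)); pose proof (HP y (proj2 Hy)). lia.
    - intros k Hk. apply in_map_iff in Hk. destruct Hk as [m [<- Hm]]. apply filter_In in Hm. apply HL; tauto. }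
  pose proof (G (Z.leb 0) ltac:(left; intros x Hx; apply Z.leb_le; auto)).
  pose proof (G (fun x => negb (Z.leb 0 x)) ltac:(right; intros x Hx; destruct (Z.leb_spec 0 x); simpl in Hx; [discriminate|lia])).
  lra. Qed.

Definition symL (N : nat) : list Z := map (fun k => (Z.of_nat k - Z.of_nat N)%Z) (seq 0 (2 * N + 1)).
Lemma symL_nodup N : NoDup (symL N).
Proof. apply FinFun.Injective_map_NoDup. intros a b E; lia. apply seq_NoDup. Qed.
Lemma symL_in N m : In m (symL N) <-> (Z.abs_nat m <= N)%nat.
Proof. unfold symL. rewrite in_map_iff. split.
  - intros [k [<- Hk]]. apply in_seq in Hk. lia.
  - intros H. exists (Z.to_nat (m + Z.of_nat N)). split. lia. apply in_seq. lia. Qed.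

Lemma sum_n_lsum (g : nat -> C) n : sum_n g n = lsum g (seq 0 (S n)).
Proof. induction n. rewrite sum_O. simpl. ring.
  rewrite sum_Sn, IHn. rewrite (seq_S (S n) 0), lsum_app. simpl. change plus with Cplus. ring. Qed.

Lemma partial_lsum f N : partial_Z f N = lsum f (symL N).
Proof. unfold partial_Z, symL. rewrite sum_n_lsum, lsum_map. f_equal. f_equal. lia. Qed.

Lemma Cmod_le_parts (x : C) : (Cmod x <= Rabs (fst x) + Rabs (snd x))%R.
Proof. unfold Cmod. rewrite <- (sqrt_pow2 (Rabs (fst x) + Rabs (snd x))).
  apply sqrt_le_1_alt. rewrite <- (pow2_abs (fst x)), <- (pow2_abs (snd x)).
  pose proof (Rabs_pos (fst x)); pose proof (Rabs_pos (snd x)). nra.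
  pose proof (Rabs_pos (fst x)); pose proof (Rabs_pos (snd x)). lra. Qed.

Section Good.
Context (f : Z -> C) (K rho : R).
Context (HK : (0 <= K)%R) (Hr : (0 <= rho < 1)%R) (Hf : forall m, (Cmod (f m) <= K * rho ^ (Z.abs_nat m))%R).

Lemma f_tail L a : NoDup L -> (forall m, In m L -> (a <= Z.abs_nat m)%nat) ->
  (lsumR (fun m => Cmod (f m)) L <= K * (2 * (rho ^ a / (1 - rho))))%R.
Proof. intros NL HL. eapply Rle_trans. apply lsumR_le. intros x _. apply Hf.
  rewrite lsumR_scal. apply Rmult_le_compat_l; auto. apply Z_tail; auto. Qed.

Lemma good_bound : AbsBound f (K * (2 * (rho ^ 0 / (1 - rho))))%R.
Proof. intros L NL. apply f_tail; auto. intros; lia. Qed.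

Lemma tail_small eps : (0 < eps)%R -> exists N, forall n, (N <= n)%nat -> (K * (2 * (rho ^ n / (1 - rho))) <= eps)%R.
Proof. intros He. destruct (pow_lt_1_zero rho ltac:(rewrite Rabs_right; lra) (eps * (1 - rho) / (2 * (K + 1))))%R as [N HN].
  apply Rdiv_lt_0_compat. nra. lra.
  exists N. intros n Hn. specialize (HN n Hn). rewrite Rabs_right in HN. 2:{ apply Rle_ge, pow_le; lra. }
  assert (K * (2 * (rho ^ n / (1 - rho))) = (2 * K / (1 - rho)) * rho ^ n)%R by (field; lra). rewrite H.
  assert (0 <= 2 * K / (1 - rho))%R by (apply Rdiv_le_0_compat; lra).
  apply Rle_trans with (2 * K / (1 - rho) * (eps * (1 - rho) / (2 * (K + 1))))%R.
  apply Rmult_le_compat_l; lra.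
  assert (2 * K / (1 - rho) * (eps * (1 - rho) / (2 * (K + 1))) = eps * (K / (K + 1)))%R by (field; lra).
  rewrite H1. assert (K / (K + 1) <= 1)%R. { unfold Rdiv. apply Rmult_le_reg_r with (K+1)%R. lra. rewrite Rmult_assoc, Rinv_l, Rmult_1_r, Rmult_1_l; lra. }
  assert (0 <= K / (K+1)) by (apply Rdiv_le_0_compat; lra). nra. Qed.

Lemma good_small : AbsSmall f.
Proof. intros eps He. destruct (tail_small eps He) as [N HN]. exists (symL (N)). split. apply symL_nodup.
  intros L NL HL. eapply Rle_trans. apply (f_tail L (S N)); auto.
  intros m Hm. specialize (HL m Hm). rewrite symL_in in HL. lia. auto. Qed.

Lemma sym_close N L : NoDup L -> incl (symL N) L ->
  (Cmod (lsum f L - lsum f (symL N)) <= K * (2 * (rho ^ (S N) / (1 - rho))))%R.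
Proof. intros NL IL. rewrite (lsum_split Z.eq_dec f (symL N) L (symL_nodup N) NL IL).
  replace (lsum f (symL N) + _ - lsum f (symL N)) with (lsum f (filter (fun x => negb (inb Z.eq_dec (symL N) x)) L)) by ring.
  eapply Rle_trans. apply lsum_Cmod. apply f_tail. apply NoDup_filter; auto.
  intros m Hm. apply filter_notin_disj in Hm. rewrite symL_in in Hm. lia. Qed.

Lemma symL_incl N M : (N <= M)%nat -> incl (symL N) (symL M).
Proof. intros H m. rewrite !symL_in. lia. Qed.

Lemma good_sum : HasSum f (sum_Z f).
Proof.
  set (P := fun N => lsum f (symL N)).
  assert (Cau : forall eps, (0 < eps)%R -> exists N, forall n m, (N <= n)%nat -> (N <= m)%nat -> (Cmod (P n - P m) < eps)%R).
  { intros eps He. destruct (tail_small (eps/3) ltac:(lra)) as [N HN]. exists N. intros n m Hn Hm.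
    replace (P n - P m) with ((P n - P N) - (P m - P N)) by ring.
    eapply Rle_lt_trans. apply Cmod_tri_minus.
    pose proof (sym_close N (symL n) (symL_nodup n) (symL_incl N n Hn)).
    pose proof (sym_close N (symL m) (symL_nodup m) (symL_incl N m Hm)).
    pose proof (HN (S N) ltac:(lia)). unfold P. lra. }
  assert (ER : ex_finite_lim_seq (fun N => fst (P N))).
  { apply ex_lim_seq_cauchy_corr. intros eps. destruct (Cau eps (cond_pos eps)) as [N HN]. exists N.
    intros n m Hn Hm. eapply Rle_lt_trans. 2: apply (HN n m Hn Hm). 
    eapply Rle_trans. 2: apply re_le_Cmod. right. reflexivity. }
  assert (EI : ex_finite_lim_seq (fun N => snd (P N))).
  { apply ex_lim_seq_cauchy_corr. intros eps. destruct (Cau eps (cond_pos eps)) as [N HN]. exists N.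
    intros n m Hn Hm. eapply Rle_lt_trans. 2: apply (HN n m Hn Hm).
    eapply Rle_trans. 2: apply (Rmax_Cmod (P n - P m)). apply Rmax_r. }
  destruct ER as [lr Hlr]. destruct EI as [li Hli].
  assert (ES : sum_Z f = (lr, li)).
  { unfold sum_Z. rewrite (Lim_seq_ext _ (fun N => fst (P N))). 2:{ intros n; unfold P; rewrite partial_lsum; reflexivity. }
    rewrite (Lim_seq_ext (fun N => Im (partial_Z f N)) (fun N => snd (P N))). 2:{ intros n; unfold P; rewrite partial_lsum; reflexivity. }
    rewrite (is_lim_seq_unique _ _ Hlr), (is_lim_seq_unique _ _ Hli). reflexivity. }
  rewrite ES. intros eps He.
  apply is_lim_seq_spec in Hlr. apply is_lim_seq_spec in Hli.
  destruct (Hlr (mkposreal (eps/4) ltac:(lra))) as [N1 H1].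
  destruct (Hli (mkposreal (eps/4) ltac:(lra))) as [N2 H2].
  destruct (tail_small (eps/4) ltac:(lra)) as [N3 H3].
  set (N := (N1 + N2 + N3)%nat).
  exists (symL N). split. apply symL_nodup. intros L NL IL.
  replace (lsum f L - (lr, li)) with ((lsum f L - P N) + (P N - (lr, li))) by ring.
  eapply Rle_lt_trans. apply Cmod_triangle.
  pose proof (sym_close N L NL IL). pose proof (H3 (S N) ltac:(unfold N; lia)).
  pose proof (Cmod_le_parts (P N - (lr, li))).
  specialize (H1 N ltac:(unfold N; lia)). specialize (H2 N ltac:(unfold N; lia)). simpl in H1, H2, H4.
  unfold P in *. unfold Rminus in H1, H2. lra. Qed.
End Good.


Lemma cexp_add a b : cexp (a + b) = cexp a * cexp b.
Proof. destruct a as [a1 a2], b as [b1 b2]. unfold cexp, Cmult; simpl.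
  rewrite exp_plus, cos_plus, sin_plus. f_equal; ring. Qed.

Lemma qpow_add z s t : qpow z s * qpow z t = qpow z (s + t)%R.
Proof. unfold qpow. rewrite <- cexp_add. f_equal. rewrite RtoC_plus. ring. Qed.

Lemma qpow_2z z t : qpow (RtoC 2 * z) t = qpow z (2 * t)%R.
Proof. unfold qpow. f_equal. rewrite RtoC_mult. ring. Qed.

Lemma sqrt_cs r th : sqrt ((exp r * cos th) ^ 2 + (exp r * sin th) ^ 2) = exp r.
Proof.
  assert (E : (sin th ^ 2 + cos th ^ 2 = 1)%R) by (pose proof (sin2_cos2 th); unfold Rsqr in H; nra).
  assert (E2: ((exp r * cos th) ^ 2 + (exp r * sin th) ^ 2 = exp r ^ 2 * (sin th ^ 2 + cos th ^ 2))%R) by ring.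
  rewrite E2, E, Rmult_1_r. apply sqrt_pow2. left; apply exp_pos. Qed.

Lemma Cmod_cexp w : Cmod (cexp w) = exp (Re w).
Proof. unfold cexp, Cmod. cbn [fst snd]. apply sqrt_cs. Qed.

Lemma Cmod_qpow z t : Cmod (qpow z t) = exp (- (PI * Im z * t)).
Proof. unfold qpow. rewrite Cmod_cexp. f_equal. destruct z as [x y]. simpl. ring. Qed.

Lemma exp_nat a n : exp (a * INR n) = (exp a ^ n)%R.
Proof. induction n. simpl. rewrite Rmult_0_r, exp_0; auto.
  rewrite S_INR, Rmult_plus_distr_l, Rmult_1_r, exp_plus, IHn. simpl. ring. Qed.

Lemma INR_abs m : INR (Z.abs_nat m) = IZR (Z.abs m).
Proof. rewrite INR_IZR_INZ, Zabs2Nat.id_abs. auto. Qed.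

Definition t2 z (m : Z) := qpow z ((IZR m + /2) ^ 2)%R.
Definition t3 z (m : Z) := qpow z (IZR m ^ 2)%R.
Definition t4 z (m : Z) := pow_n (RtoC (-1)) (Z.to_nat (m * m)) * qpow z (IZR m ^ 2)%R.

Lemma exp_le x y : (x <= y)%R -> (exp x <= exp y)%R.
Proof. intros H. destruct (Rle_lt_or_eq_dec _ _ H). left; apply exp_increasing; auto. subst; lra. Qed.

Lemma Cmod_m1_pow k : Cmod (pow_n (RtoC (-1)) k) = 1%R.
Proof. induction k. simpl. apply Cmod_1. change (pow_n (RtoC (-1)) (S k)) with (RtoC (-1) * pow_n (RtoC (-1)) k).
  rewrite Cmod_mult, IHk, Cmod_R. rewrite Rabs_left; lra. Qed.

Section Bounds.
Context (z : C) (hz : (0 < Im z)%R).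
Let rho := exp (- (PI * Im z)).
Lemma rho_bounds : (0 <= rho < 1)%R.
Proof. unfold rho. split. left; apply exp_pos. rewrite <- exp_0. apply exp_increasing.
  pose proof PI_RGT_0. nra. Qed.

Lemma t3_bound m : (Cmod (t3 z m) <= 1 * rho ^ (Z.abs_nat m))%R.
Proof. unfold t3, rho. rewrite Cmod_qpow, Rmult_1_l, <- exp_nat. apply exp_le.
  rewrite INR_abs. assert (IZR (Z.abs m) <= IZR m ^ 2)%R.
  { replace (IZR m ^ 2)%R with (IZR (m * m)) by (rewrite mult_IZR; ring). apply IZR_le. nia. }
  pose proof PI_RGT_0. assert (0 < PI * Im z)%R by nra. nra. Qed.

Lemma t4_bound m : (Cmod (t4 z m) <= 1 * rho ^ (Z.abs_nat m))%R.
Proof. unfold t4. rewrite Cmod_mult, Cmod_m1_pow, Rmult_1_l. apply t3_bound. Qed.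

Lemma t2_bound m : (Cmod (t2 z m) <= exp (PI * Im z) * rho ^ (Z.abs_nat m))%R.
Proof. unfold t2, rho. rewrite Cmod_qpow, <- exp_nat, <- exp_plus. apply exp_le.
  rewrite INR_abs. assert (IZR (Z.abs m) - 1 <= (IZR m + /2) ^ 2)%R.
  { destruct (Z_le_gt_dec 0 m).
    - rewrite Z.abs_eq by auto. assert (0 <= IZR m)%R by (apply IZR_le; auto). assert (/2 = 0.5)%R as -> by lra. nra.
    - rewrite Z.abs_neq by lia. rewrite opp_IZR. pose proof (pow2_ge_0 (IZR m + 1)). assert (/2 = 0.5)%R as ->  by lra. nra. }
  pose proof PI_RGT_0. assert (0 < PI * Im z)%R by nra. nra. Qed.

Lemma theta3_good : HasSum (t3 z) (theta3 z) /\ AbsSmall (t3 z) /\ exists B, AbsBound (t3 z) B.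
Proof. pose proof rho_bounds. split; [|split].
  apply (good_sum _ 1 rho); auto; try lra. apply t3_bound.
  apply (good_small _ 1 rho); auto; try lra. apply t3_bound.
  eexists. apply (good_bound _ 1 rho); auto; try lra. apply t3_bound. Qed.
Lemma theta4_good : HasSum (t4 z) (theta4 z) /\ AbsSmall (t4 z) /\ exists B, AbsBound (t4 z) B.
Proof. pose proof rho_bounds. split; [|split].
  apply (good_sum _ 1 rho); auto; try lra. apply t4_bound.
  apply (good_small _ 1 rho); auto; try lra. apply t4_bound.
  eexists. apply (good_bound _ 1 rho); auto; try lra. apply t4_bound. Qed.
Lemma theta2_good : HasSum (t2 z) (theta2 z) /\ AbsSmall (t2 z) /\ exists B, AbsBound (t2 z) B.
Proof. pose proof rho_bounds. pose proof (exp_pos (PI * Im z)). split; [|split].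
  apply (good_sum _ (exp (PI * Im z)) rho); auto; try lra. apply t2_bound.
  apply (good_small _ (exp (PI * Im z)) rho); auto; try lra. apply t2_bound.
  eexists. apply (good_bound _ (exp (PI * Im z)) rho); auto; try lra. apply t2_bound. Qed.
End Bounds.


Definition dZZ := dxy Z.eq_dec Z.eq_dec.
Definition dS : forall a b : (Z*Z)+(Z*Z), {a=b}+{a<>b}.
Proof. decide equality; apply dZZ. Defined.

Definition Phi (s : (Z*Z)+(Z*Z)) : Z*Z :=
  match s with inl (j,k) => ((j+k)%Z, (j-k)%Z) | inr (j,k) => ((j+k+1)%Z, (j-k)%Z) end.
Definition Phi' (p : Z*Z) : (Z*Z)+(Z*Z) := let (m,n) := p in
  if Z.even (m+n) then inl (((m+n)/2)%Z, ((m-n)/2)%Z) else inr (((m+n-1)/2)%Z, ((m-n-1)/2)%Z).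
Definition Psi (s : (Z*Z)+(Z*Z)) : Z*Z :=
  match s with inl (j,k) => ((j+k)%Z, (j-k-1)%Z) | inr (j,k) => ((j+k)%Z, (j-k)%Z) end.
Definition Psi' (p : Z*Z) : (Z*Z)+(Z*Z) := let (m,n) := p in
  if Z.even (m+n) then inr (((m+n)/2)%Z, ((m-n)/2)%Z) else inl (((m+n+1)/2)%Z, ((m-n-1)/2)%Z).

Lemma even_odd_cases (x : Z) : (Z.even x = true -> exists t, x = (2*t)%Z) /\ (Z.even x = false -> exists t, x = (2*t+1)%Z).
Proof. split; intros E. apply Z.even_spec in E. auto.
  assert (Z.odd x = true) by (rewrite <- Z.negb_even, E; auto). apply Z.odd_spec in H. auto. Qed.

Lemma Phi_K1 p : Phi (Phi' p) = p.
Proof. destruct p as [m n]; unfold Phi'. destruct (Z.even (m+n)) eqn:E.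
  - destruct (proj1 (even_odd_cases _) E) as [t Ht]. simpl. f_equal; Z.div_mod_to_equations; lia.
  - destruct (proj2 (even_odd_cases _) E) as [t Ht]. simpl. f_equal; Z.div_mod_to_equations; lia. Qed.
Lemma ev2 j : Z.even (2*j) = true. Proof. rewrite Z.even_mul; reflexivity. Qed.
Lemma ev21 j : Z.even (2*j+1) = false. Proof. rewrite Z.even_add, Z.even_mul; reflexivity. Qed.
Lemma Phi_K2 s : Phi' (Phi s) = s.
Proof. destruct s as [[j k]|[j k]]; unfold Phi, Phi'.
  - replace (j + k + (j - k))%Z with (2*j)%Z by ring. rewrite ev2. cbv beta iota. f_equal. f_equal; Z.div_mod_to_equations; lia.
  - replace (j + k + 1 + (j - k))%Z with (2*j+1)%Z by ring. rewrite ev21. cbv beta iota. f_equal. f_equal; Z.div_mod_to_equations; lia. Qed.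
Lemma Psi_K1 p : Psi (Psi' p) = p.
Proof. destruct p as [m n]; unfold Psi'. destruct (Z.even (m+n)) eqn:E.
  - destruct (proj1 (even_odd_cases _) E) as [t Ht]. simpl. f_equal; Z.div_mod_to_equations; lia.
  - destruct (proj2 (even_odd_cases _) E) as [t Ht]. simpl. f_equal; Z.div_mod_to_equations; lia. Qed.
Lemma Psi_K2 s : Psi' (Psi s) = s.
Proof. destruct s as [[j k]|[j k]]; unfold Psi, Psi'.
  - replace (j + k + (j - k - 1))%Z with (2*(j-1)+1)%Z by ring. rewrite ev21. cbv beta iota. f_equal. f_equal; Z.div_mod_to_equations; lia.
  - replace (j + k + (j - k))%Z with (2*j)%Z by ring. rewrite ev2. cbv beta iota. f_equal. f_equal; Z.div_mod_to_equations; lia. Qed.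

Lemma Im2 z : (0 < Im z)%R -> (0 < Im (RtoC 2 * z))%R.
Proof. destruct z as [x y]. simpl. lra. Qed.

Lemma sgn_even t : pow_n (RtoC (-1)) (2*t) = RtoC 1.
Proof. induction t. reflexivity. replace (2 * S t)%nat with (S (S (2 * t))) by lia.
  change (pow_n (RtoC (-1)) (S (S (2 * t)))) with (RtoC (-1) * (RtoC (-1) * pow_n (RtoC (-1)) (2 * t))).
  rewrite IHt, <- !RtoC_mult. f_equal. ring. Qed.
Lemma sgn_odd t : pow_n (RtoC (-1)) (2*t+1) = RtoC (-1).
Proof. replace (2*t+1)%nat with (S (2*t)) by lia.
  change (pow_n (RtoC (-1)) (S (2 * t))) with (RtoC (-1) * pow_n (RtoC (-1)) (2 * t)).
  rewrite sgn_even, <- RtoC_mult. f_equal. ring. Qed.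
Lemma sgn_mul a b : pow_n (RtoC (-1)) a * pow_n (RtoC (-1)) b = pow_n (RtoC (-1)) (a+b).
Proof. symmetry. exact (@pow_n_plus C_Ring (RtoC (-1)) a b). Qed.

Ltac qeq := unfold t2, t3, t4; rewrite ?qpow_2z, ?qpow_add; f_equal;
  repeat rewrite ?plus_IZR, ?minus_IZR; field.

Lemma I1 z : (0 < Im z)%R ->
  theta3 z * theta3 z = theta3 (RtoC 2 * z) * theta3 (RtoC 2 * z) + theta2 (RtoC 2 * z) * theta2 (RtoC 2 * z).
Proof. intros hz. pose proof (Im2 z hz) as hz2.
  destruct (theta3_good z hz) as [S3 [A3 [B3 HB3]]].
  destruct (theta3_good _ hz2) as [S3' [A3' [B3' HB3']]].
  destruct (theta2_good _ hz2) as [S2' [A2' [B2' HB2']]].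
  pose proof (HasSum_prod Z.eq_dec Z.eq_dec _ _ _ _ _ _ S3 S3 A3 A3 HB3 HB3) as P.
  pose proof (HasSum_bij Phi Phi' _ _ Phi_K1 Phi_K2 P) as Q.
  pose proof (HasSum_sum (fun s => match s with inl p => t3 (RtoC 2 * z) (fst p) * t3 (RtoC 2 * z) (snd p)
                                   | inr p => t2 (RtoC 2 * z) (fst p) * t2 (RtoC 2 * z) (snd p) end) _ _
     (HasSum_prod Z.eq_dec Z.eq_dec _ _ _ _ _ _ S3' S3' A3' A3' HB3' HB3')
     (HasSum_prod Z.eq_dec Z.eq_dec _ _ _ _ _ _ S2' S2' A2' A2' HB2' HB2')) as R.
  apply (HasSum_unique dS _ _ _ Q). eapply HasSum_ext; [|exact R].
  intros [[j k]|[j k]]; simpl; qeq. Qed.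

Lemma I2 z : (0 < Im z)%R ->
  theta4 z * theta4 z = theta3 (RtoC 2 * z) * theta3 (RtoC 2 * z) + RtoC (-1) * (theta2 (RtoC 2 * z) * theta2 (RtoC 2 * z)).
Proof. intros hz. pose proof (Im2 z hz) as hz2.
  destruct (theta4_good z hz) as [S4 [A4 [B4 HB4]]].
  destruct (theta3_good _ hz2) as [S3' [A3' [B3' HB3']]].
  destruct (theta2_good _ hz2) as [S2' [A2' [B2' HB2']]].
  pose proof (HasSum_prod Z.eq_dec Z.eq_dec _ _ _ _ _ _ S4 S4 A4 A4 HB4 HB4) as P.
  pose proof (HasSum_bij Phi Phi' _ _ Phi_K1 Phi_K2 P) as Q.
  pose proof (HasSum_sum (fun s => match s with inl p => t3 (RtoC 2 * z) (fst p) * t3 (RtoC 2 * z) (snd p)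
                                   | inr p => RtoC (-1) * (t2 (RtoC 2 * z) (fst p) * t2 (RtoC 2 * z) (snd p)) end) _ _
     (HasSum_prod Z.eq_dec Z.eq_dec _ _ _ _ _ _ S3' S3' A3' A3' HB3' HB3')
     (HasSum_scal _ _ _ (HasSum_prod Z.eq_dec Z.eq_dec _ _ _ _ _ _ S2' S2' A2' A2' HB2' HB2'))) as R.
  apply (HasSum_unique dS _ _ _ Q). eapply HasSum_ext; [|exact R].
  intros [[j k]|[j k]]; simpl; unfold t4.
  - replace (pow_n (RtoC (-1)) (Z.to_nat ((j + k) * (j + k))) * qpow z (IZR (j + k) ^ 2) *
      (pow_n (RtoC (-1)) (Z.to_nat ((j - k) * (j - k))) * qpow z (IZR (j - k) ^ 2)))
    with ((pow_n (RtoC (-1)) (Z.to_nat ((j + k) * (j + k))) * pow_n (RtoC (-1)) (Z.to_nat ((j - k) * (j - k)))) *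
          (qpow z (IZR (j + k) ^ 2) * qpow z (IZR (j - k) ^ 2))) by ring.
    rewrite sgn_mul.
    replace (Z.to_nat ((j + k) * (j + k)) + Z.to_nat ((j - k) * (j - k)))%nat with (2 * Z.to_nat (j*j+k*k))%nat.
    2:{ apply Nat2Z.inj. rewrite Nat2Z.inj_add, Nat2Z.inj_mul.
        rewrite (Z2Nat.id ((j+k)*(j+k))), (Z2Nat.id ((j-k)*(j-k))), (Z2Nat.id (j*j+k*k)) by (first [apply Z.square_nonneg | pose proof (Z.square_nonneg j); pose proof (Z.square_nonneg k); lia]).
        change (Z.of_nat 2) with 2%Z. ring. }
    rewrite sgn_even. rewrite Cmult_1_l. qeq.
  - replace (pow_n (RtoC (-1)) (Z.to_nat ((j + k + 1) * (j + k + 1))) * qpow z (IZR (j + k + 1) ^ 2) *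
      (pow_n (RtoC (-1)) (Z.to_nat ((j - k) * (j - k))) * qpow z (IZR (j - k) ^ 2)))
    with ((pow_n (RtoC (-1)) (Z.to_nat ((j + k + 1) * (j + k + 1))) * pow_n (RtoC (-1)) (Z.to_nat ((j - k) * (j - k)))) *
          (qpow z (IZR (j + k + 1) ^ 2) * qpow z (IZR (j - k) ^ 2))) by ring.
    rewrite sgn_mul.
    replace (Z.to_nat ((j + k + 1) * (j + k + 1)) + Z.to_nat ((j - k) * (j - k)))%nat with (2 * Z.to_nat (j*j+k*k+j+k) + 1)%nat.
    2:{ assert (0 <= j*j+j)%Z by (destruct (Z_le_gt_dec 0 j); nia).
        assert (0 <= k*k+k)%Z by (destruct (Z_le_gt_dec 0 k); nia).
        apply Nat2Z.inj. rewrite !Nat2Z.inj_add, Nat2Z.inj_mul.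
        rewrite (Z2Nat.id ((j+k+1)*(j+k+1))), (Z2Nat.id ((j-k)*(j-k))), (Z2Nat.id (j*j+k*k+j+k)) by (first [apply Z.square_nonneg | lia]).
        change (Z.of_nat 2) with 2%Z. change (Z.of_nat 1) with 1%Z. ring. }
    rewrite sgn_odd. f_equal. qeq. Qed.

Lemma I3 z : (0 < Im z)%R ->
  theta2 z * theta2 z = theta3 (RtoC 2 * z) * theta2 (RtoC 2 * z) + theta2 (RtoC 2 * z) * theta3 (RtoC 2 * z).
Proof. intros hz. pose proof (Im2 z hz) as hz2.
  destruct (theta2_good z hz) as [S2 [A2 [B2 HB2]]].
  destruct (theta3_good _ hz2) as [S3' [A3' [B3' HB3']]].
  destruct (theta2_good _ hz2) as [S2' [A2' [B2' HB2']]].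
  pose proof (HasSum_prod Z.eq_dec Z.eq_dec _ _ _ _ _ _ S2 S2 A2 A2 HB2 HB2) as P.
  pose proof (HasSum_bij Psi Psi' _ _ Psi_K1 Psi_K2 P) as Q.
  pose proof (HasSum_sum (fun s => match s with inl p => t3 (RtoC 2 * z) (fst p) * t2 (RtoC 2 * z) (snd p)
                                   | inr p => t2 (RtoC 2 * z) (fst p) * t3 (RtoC 2 * z) (snd p) end) _ _
     (HasSum_prod Z.eq_dec Z.eq_dec _ _ _ _ _ _ S3' S2' A3' A2' HB3' HB2')
     (HasSum_prod Z.eq_dec Z.eq_dec _ _ _ _ _ _ S2' S3' A2' A3' HB2' HB3')) as R.
  apply (HasSum_unique dS _ _ _ Q). eapply HasSum_ext; [|exact R].
  intros [[j k]|[j k]]; simpl; qeq. Qed.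

Lemma jacobi z : (0 < Im z)%R ->
  theta3 z * theta3 z * (theta3 z * theta3 z) =
  theta2 z * theta2 z * (theta2 z * theta2 z) + theta4 z * theta4 z * (theta4 z * theta4 z).
Proof. intros hz. rewrite (I1 z hz), (I2 z hz), (I3 z hz). ring. Qed.


Lemma pS (x : C) n : @eq C (pow_n x (S n)) (x * pow_n x n). Proof. reflexivity. Qed.
Lemma p0 (x : C) : @eq C (pow_n x 0) (RtoC 1). Proof. reflexivity. Qed.

Lemma pw4 (T : C) m : @eq C (pow_n T (4*m)) (pow_n (T*T*(T*T)) m).
Proof. induction m. reflexivity. replace (4 * S m)%nat with (4 + 4*m)%nat by lia.
  transitivity (pow_n T 4 * pow_n (T*T*(T*T)) m : C).
  rewrite <- IHm. exact (@pow_n_plus C_Ring T 4 (4*m)).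
  rewrite (pS (T*T*(T*T)) m). rewrite !pS, p0. ring. Qed.
Lemma pw (T : C) e m : @eq C (pow_n T (e + 4*m)) (pow_n T e * pow_n (T*T*(T*T)) m).
Proof. rewrite <- pw4. exact (@pow_n_plus C_Ring T e (4*m)). Qed.
Lemma pw8 (T : C) : @eq C (pow_n T 8) (pow_n (T*T*(T*T)) 2).
Proof. exact (pw4 T 2). Qed.

Lemma two_nz : RtoC 2 <> 0.
Proof. intros H. injection H. lra. Qed.

Lemma R256 : RtoC (@pow_n R_Ring 2%R 8) = @pow_n C_Ring (RtoC 2) 8.
Proof. rewrite pow_n_pow, !pS, p0. rewrite <- !RtoC_mult. reflexivity. Qed.

Lemma D8 (x y w : C) : @eq C (RtoC (@pow_n R_Ring 2%R 8) * pow_n (x*y*w/RtoC 2) 8)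
  (pow_n (x*x*(x*x)) 2 * pow_n (y*y*(y*y)) 2 * pow_n (w*w*(w*w)) 2).
Proof. rewrite R256, !pS, !p0. field; apply two_nz. Qed.

Theorem lemma2p3 (z : CC) (hz : (0 < Im z)%R) (n : nat) (hn : (3 <= n)%nat) :
  rho n z = 2 * E4 z * rho (n - 1) z - pow_n (E4 z) 2 * rho (n - 2) z
            + pow_n 2 8 * Delta24 z * rho (n - 3) z.
Proof.
  pose proof (jacobi z hz) as J.
  destruct n as [|[|[|k]]]; try lia.
  replace (S (S (S k)) - 1)%nat with (S (S k)) by lia.
  replace (S (S (S k)) - 2)%nat with (S k) by lia.
  replace (S (S (S k)) - 3)%nat with k by lia.
  assert (HD : pow_n 2 8 * Delta24 z = pow_n (theta2 z * theta2 z * (theta2 z * theta2 z)) 2 *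
     pow_n (theta3 z * theta3 z * (theta3 z * theta3 z)) 2 * pow_n (theta4 z * theta4 z * (theta4 z * theta4 z)) 2).
  { unfold Delta24. apply D8. }
  rewrite HD.
  unfold rho, E4.
  replace (8 * (S (S (S k)) + 1) + 4)%nat with ((8*k+4) + 4*8)%nat by lia.
  replace (8 * (S (S k) + 1) + 4)%nat with ((8*k+4) + 4*6)%nat by lia.
  replace (8 * (S k + 1) + 4)%nat with ((8*k+4) + 4*4)%nat by lia.
  replace (8 * (k + 1) + 4)%nat with ((8*k+4) + 4*2)%nat by lia.
  rewrite !pw, !pw8.
  set (a := theta3 z) in *. set (b := theta2 z) in *. set (c := theta4 z) in *.
  set (D := pow_n (b * a * c) 4). unfold Cdiv. set (iD := Cinv D). clearbody iD.
  set (Wa := pow_n a (8 * k + 4)). set (Wb := pow_n b (8 * k + 4)). set (Wc := pow_n c (8 * k + 4)).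
  clearbody Wa Wb Wc D.
  set (A4 := a * a * (a * a)) in *. set (B4 := b * b * (b * b)) in *. set (C4 := c * c * (c * c)) in *.
  clearbody A4 B4 C4. subst A4.
  rewrite !pS, !p0. field; apply two_nz. Qed.
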